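(* Let $G$ be a finite group and $n$ a nonnegative integer. Then: (a) if $G$ has exactly $n$ irrational conjugacy classes, then $G$ has at most $\frac{n^2}{2}$ irrational irreducible characters; (b) if $G$ has exactly $n$ irrational irreducible characters, then $G$ has at most $\frac{n^2}{2}$ irrational conjugacy classes.
   Context: A conjugacy class $K$ of a finite group $G$ is irrational if $\chi(K) \notin \mathbb{Q}$ for some complex irreducible character $\chi$ of $G$. An irreducible character $\chi$ is irrational if some value of $\chi$ is not in $\mathbb{Q}$. *)

(* Defs.v *)
From mathcomp Require Import all_boot all_order all_algebra all_fingroup all_solvable all_field all_character.
Set Implicit Arguments.
Unset Strict Implicit.
Unset Printing Implicit Defensive.
Import GRing.Theory Num.Theory.
Local Open Scope ring_scope.
Local Open Scope group_scope.

Definition irrational_class (gT : finGroupType) (G : {group gT}) (K : {set gT}) : bool :=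
  [exists i : Iirr G, ('chi[G]_i (repr K) \notin Crat)%R].

Definition irrational_char (gT : finGroupType) (G : {group gT}) (i : Iirr G) : bool :=
  [exists x in G, ('chi[G]_i x \notin Crat)%R].

Definition n_irr_classes (gT : finGroupType) (G : {group gT}) : nat :=
  #|[set K in classes G | irrational_class G K]|.

Definition n_irr_chars (gT : finGroupType) (G : {group gT}) : nat :=
  #|[set i : Iirr G | irrational_char i]|.

(* Main.v *)
Require Import Defs.
From mathcomp Require Import all_boot all_order all_algebra all_fingroup all_solvable all_field all_character.
From mathcomp Require Import zify boolp.
Set Implicit Arguments.
Unset Strict Implicit.
Unset Printing Implicit Defensive.
Import GRing.Theory Num.Theory.

Lemma arith m n : (m + 2 <= 2 * n)%N -> (2 * m <= n ^ 2)%N.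
Proof.
move=> h; rewrite -mulnn; have [le4|lt4] := leqP 4 n.
  have : (4 * n <= n * n)%N by rewrite leq_mul2r le4 orbT.
  lia.
by move: h; case: n lt4 => [|[|[|[|]]]] //= _; lia.
Qed.

Section Helpers.
Local Open Scope group_scope.
Local Open Scope ring_scope.

Lemma key_lemma (gT : finGroupType) (G : {group gT}) (I : finType) (P : {set I})
  (v : I -> 'CF(G)) (R : rel I) (Y : {vspace 'CF(G)}) (w : 'CF(G)) :
  {in P &, forall i j, i != j -> '[v i, v j] = 0} ->
  {in P, forall i, v i != 0} ->
  {in P &, forall i j, R i j -> R j i} ->
  (forall i j k, i \in P -> j \in P -> k \in P -> R i j -> R j k -> R i k) ->
  (forall i, i \in P -> exists2 j, j \in P & (j != i) && R i j) ->
  (forall i j, i \in P -> j \in P -> R i j -> v i - v j \in Y) ->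
  (forall i j, i \in P -> j \in P -> R i j -> '[v i - v j, w] = 0) ->
  w \in Y -> w != 0 ->
  (#|P| + 2 <= 2 * \dim Y)%N.
Proof.
move=> ortho nz0 Rsym Rtr partner inY orthw wY nzw.
pose X := [seq v p.1 - v p.2 | p <- enum [set p : I * I | [&& p.1 \in P, p.2 \in P & R p.1 p.2]]].
pose D := <<X>>%VS.
have XD i j : i \in P -> j \in P -> R i j -> v i - v j \in D.
  move=> Pi Pj Rij; apply: memv_span; apply/mapP; exists (i, j) => //.
  by rewrite mem_enum inE /= Pi Pj Rij.
have DY : (D <= Y)%VS.
  apply/span_subvP => x /mapP[p]; rewrite mem_enum inE => /and3P[P1 P2 R12] ->.
  exact: inY.
have Dorth x : x \in D -> '[x, w] = 0.
  move=> xD; have xD' : x \in <<in_tuple X>>%VS by [].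
  rewrite (coord_span xD') cfdot_suml big1 // => i _.
  rewrite cfdotZl; have : X`_i \in X by exact: mem_nth.
  by case/mapP=> p; rewrite mem_enum inE => /and3P[P1 P2 R12] ->; rewrite orthw ?mulr0.
have wD : w \notin D.
  by apply: contra nzw => /Dorth /eqP; rewrite cfnorm_eq0.
have dimD : (\dim D + 1 <= \dim Y)%N.
  have sub : (D <= D + <[w]>)%VS by apply: addvSl.
  have lt : (\dim D < \dim (D + <[w]>))%N.
    rewrite (ltn_leqif (dimv_leqif_sup sub)).
    apply: contra wD => sub'; apply: (subvP sub'); apply: (subvP (addvSr _ _)).
    exact: memv_line.
  rewrite addn1; apply: leq_trans lt _; apply: dimvS.
  by rewrite subv_add DY -memvE.
pose rep i := odflt i [pick j in P | R i j].
have repP i : i \in P -> (rep i \in P) && R i (rep i).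
  move=> Pi; rewrite /rep; case: pickP => [j /andP[Pj Rij] | none] /=.
    by rewrite Pj Rij.
  have [j Pj /andP[_ Rij]] := partner i Pi.
  by move: (none j); rewrite Pj Rij.
have repE i j : i \in P -> j \in P -> R i j -> rep i = rep j.
  move=> Pi Pj Rij; rewrite /rep.
  have -> : [pick k in P | R i k] = [pick k in P | R j k].
    apply: eq_pick => k /=.
    apply/andP/andP => [[Pk Rik]|[Pk Rjk]]; split => //.
      exact: Rtr Pj Pi Pk (Rsym _ _ Pi Pj Rij) Rik.
    exact: Rtr Pi Pj Pk Rij Rjk.
  case: pickP => [//|none].
  have [k Pk /andP[_ Rjk]] := partner j Pj.
  by move: (none k); rewrite Pk Rjk.
pose Im := rep @: P.
pose W := <<[seq v i | i in P]>>%VS.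
have freeW : free [seq v i | i in P].
  apply: orthogonal_free; apply/pairwise_orthogonalP; split.
    rewrite /= map_inj_in_uniq ?enum_uniq ?andbT.
      by apply/mapP => -[i]; rewrite mem_enum => Pi /esym/eqP; rewrite (negPf (nz0 i Pi)).
    move=> i j; rewrite !mem_enum => Pi Pj eqv; apply/eqP; apply: contraT => nij.
    by move: (nz0 i Pi); rewrite -cfnorm_eq0 {2}eqv ortho ?eqxx.
  move=> _ _ /mapP[i Pi ->] /mapP[j Pj ->] nij; rewrite mem_enum in Pi; rewrite mem_enum in Pj.
  apply: (ortho i j Pi Pj); by apply/eqP => eij; move: nij; rewrite eij eqxx.
have dimW : \dim W = #|P|.
  by rewrite (eqnP freeW) size_map -cardE.
have WDZ : (W <= D + <<[seq v b | b in Im]>>)%VS.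
  apply/span_subvP => x /mapP[i]; rewrite mem_enum => Pi ->.
  have /andP[Pr Rr] := repP i Pi.
  rewrite -[v i](subrK (v (rep i))); apply: memv_add; first exact: XD.
  by apply: memv_span; apply: map_f; rewrite mem_enum; apply: imset_f.
have le1 : (#|P| <= \dim D + #|Im|)%N.
  rewrite -dimW; apply: leq_trans (dimvS WDZ) _.
  apply: leq_trans (dimv_add_leqif _ _).1 _; rewrite leq_add2l.
  by apply: leq_trans (dim_span _) _; rewrite size_map -cardE.
have le2 : (2 * #|Im| <= #|P|)%N.
  rewrite -[#|P|]sum1_card (partition_big rep (fun b => b \in Im)) /=; last first.
    by move=> i Pi; apply: imset_f.
  rewrite mulnC -sum_nat_const; apply: leq_sum => b /imsetP[i0 Pi0 ->].
  have /andP[Pb Rb] := repP i0 Pi0.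
  have [j Pj /andP[njb Rbj]] := partner _ Pb.
  have rb : rep (rep i0) = rep i0 by rewrite -(repE _ _ Pi0 Pb Rb).
  have rj : rep j = rep i0 by rewrite -(repE _ _ Pb Pj Rbj) rb.
  rewrite (bigD1 (rep i0)) /=; last by rewrite Pb rb eqxx.
  rewrite (bigD1 j) /=; last by rewrite Pj rj eqxx njb.
  by rewrite addnA leq_addr.
lia.
Qed.

Lemma irr_val_rat (gT : finGroupType) (G : {group gT}) i x :
  (forall u : {rmorphism algC -> algC}, u ('chi[G]_i x) = 'chi_i x) ->
  'chi_i x \in Crat.
Proof.
move=> fix_u.
have [Gx | nGx] := boolP (x \in G); last by rewrite cfun0 ?Crat0.
have [Qn galQn [QnC gQnC [w _ QnCw]]] := group_num_field_exists G.
have [a Da] := QnCw _ _ _ (irr_char i) x (order_dvdG Gx).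
have : a \in fixedField ('Gal({:Qn} / 1))%g.
  apply/fixedFieldP; first exact: memvf.
  move=> nuQn galnu.
  have [nu Dnu] := gQnC nuQn.
  apply: (fmorph_inj QnC).
  have := Dnu a; rewrite /= => ->. by rewrite Da fix_u.
have /galois_fixedField -> := galQn.
move=> /vlineP[c Dc].
by rewrite -Da Dc rmorphZ_num rmorph1 mulr1 Crat_rat.
Qed.

Lemma aut_class (gT : finGroupType) (G : {group gT}) (u : {rmorphism algC -> algC}) x :
  x \in G -> exists2 y, y \in G & forall i, 'chi[G]_i y = u ('chi_i x).
Proof.
move=> Gx.
have [z prim_z] := C_prim_root_exists (cardG_gt0 G).
have uzN : (u z) ^+ #|G| = 1.
  by rewrite -rmorphXn /= (prim_expr_order prim_z) rmorph1.
have [k Dk] := prim_rootP prim_z uzN.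
have uroot t : t ^+ #|G| = 1 -> u t = t ^+ k.
  move=> tN; have [j ->] := prim_rootP prim_z tN.
  by rewrite rmorphXn /= Dk -!exprM mulnC.
exists (x ^+ k)%g; first exact: groupX.
move=> i.
pose H := <[x]>%G.
have sHG : H \subset G by rewrite cycle_subG.
have Hx : x \in H by apply: cycle_id.
have cHH : abelian H by apply: cycle_abelian.
pose psi := 'Res[H] 'chi[G]_i.
have psi_ch : psi \is a character by apply: cfRes_char; apply: irr_char.
have Dpsi := cfun_sum_cfdot psi.
rewrite -(cfResE _ sHG Hx) -(cfResE _ sHG (groupX k Hx)) -/psi.
rewrite Dpsi !sum_cfunE rmorph_sum; apply: eq_bigr => j _.
rewrite !cfunE rmorphM /=.
have /natrP[c ->] := Cnat_cfdot_char_irr j psi_ch.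
rewrite rmorph_nat; congr (_ * _).
have lin := char_abelianP _ cHH j.
rewrite (lin_charX lin _ Hx) uroot //.
have /dvdnP[q ->] := order_dvdG Gx.
by rewrite mulnC exprM (lin_char_unity_root lin Hx) expr1n.
Qed.

Lemma irr_char_aut (gT : finGroupType) (G : {group gT}) (u : {rmorphism algC -> algC}) i :
  irrational_char (aut_Iirr u i) = irrational_char (G:=G) i.
Proof.
rewrite /irrational_char; apply: eq_existsb => x.
by rewrite aut_IirrE cfunE Crat_aut.
Qed.

Lemma rat_char_val (gT : finGroupType) (G : {group gT}) i x :
  ~~ irrational_char (G:=G) i -> 'chi_i x \in Crat.
Proof.
move=> /exists_inPn h.
have [Gx|nGx] := boolP (x \in G); last by rewrite cfun0 ?Crat0.
by have := h x Gx; rewrite negbK.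
Qed.

Lemma rat_class_val (gT : finGroupType) (G : {group gT}) i x :
  x \in G -> ~~ irrational_class G (x ^: G) -> 'chi[G]_i x \in Crat.
Proof.
move=> Gx /existsPn /(_ i); rewrite negbK cfun_repr //.
Qed.

Lemma classA (gT : finGroupType) (G : {group gT}) x :
  x \in G ->
  (x ^: G \subset [set y in G | irrational_class G (y ^: G)]) = irrational_class G (x ^: G).
Proof.
move=> Gx; apply/subsetP/idP => [h | irr y xGy].
  by have := h x (class_refl G x); rewrite inE => /andP[].
have [g Gg ->] := imsetP xGy.
rewrite inE groupJ //= classGidl //.
Qed.


Lemma part_a (gT : finGroupType) (G : {group gT}) :
  n_irr_classes G != 0%N -> (n_irr_chars G + 2 <= 2 * n_irr_classes G)%N.
Proof.
move=> nz.
pose S := [set i : Iirr G | irrational_char i].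
pose A := [set y in G | irrational_class G (y ^: G)].
pose T := [set K in classes G | irrational_class G K].
pose R := fun i j : Iirr G =>
  `[< exists u : {rmorphism algC -> algC}, 'chi[G]_j = cfAut u 'chi_i >].
have dimY : \dim 'CF(G, A) = n_irr_classes G.
  rewrite dim_cfun_on /n_irr_classes; apply: eq_card => K; rewrite !inE.
  apply: andb_id2l => /imsetP[x Gx ->]; exact: classA.
rewrite -dimY.
have nA : A <| G.
  apply/andP; split; first by apply/subsetP => y; rewrite inE => /andP[].
  apply/subsetP => g Gg; rewrite inE; apply/subsetP => _ /imsetP[y Ay ->].
  by move: Ay; rewrite !inE => /andP[Gy iy]; rewrite groupJ //= classGidl.
have val1A x : ('1_A : 'CF(G)) x = ((x \in G) && irrational_class G (x ^: G))%:R.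
  by rewrite cfuniE // inE.
apply: (@key_lemma _ G _ S (fun i => 'chi_i) R _ '1_A).
- by move=> i j _ _ nij; rewrite cfdot_irr (negPf nij).
- by move=> i _; apply: irr_neq0.
- move=> i j _ _ /asboolP[u Du]; apply/asboolP; exists (algC_invaut u).
  by apply/cfunP => x; rewrite Du !cfunE; apply/esym; apply: (algC_autK u).
- move=> i j k _ _ _ /asboolP[u Du] /asboolP[v Dv]; apply/asboolP.
  exists (v \o u)%FUN; by apply/cfunP => x; rewrite Dv Du !cfunE.
- move=> i Si; move: (Si); rewrite /S inE => /exists_inP[x Gx nQ].
  have [u nu] : exists u : {rmorphism algC -> algC}, u ('chi_i x) != 'chi_i x.
    apply/not_existsP => h; apply: (negP nQ); apply: irr_val_rat => u.
    by apply/eqP/negPn/negP; apply: h.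
  exists (aut_Iirr u i); first by rewrite /S inE irr_char_aut; rewrite /S inE in Si.
  apply/andP; split.
    apply/eqP => e; move/eqP: nu; apply.
    by have := congr1 (fun k => 'chi[G]_k x) e; rewrite /= aut_IirrE cfunE.
  by apply/asboolP; exists u; rewrite aut_IirrE.
- move=> i j _ _ /asboolP[u ->]; apply/cfun_onP => x nAx.
  have [Gx|nGx] := boolP (x \in G); last by rewrite cfun0.
  rewrite !cfunE aut_Crat ?subrr //; apply: rat_class_val => //.
  by apply: contra nAx => h; rewrite inE Gx.
- move=> i j _ _ /asboolP[u ->].
  rewrite cfdotBl.
  have -> : '[cfAut u 'chi_i, '1_A] = u '['chi_i, '1_A].
    rewrite -[X in '[_, X]](cfAut_cfuni u G A).
    apply: cfdot_cfAut => _ /mapP[x _ ->].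
    by rewrite val1A conjC_nat rmorph_nat conjC_nat.
  suff Q : '['chi_i, '1_A] \in Crat by rewrite aut_Crat // subrr.
  have -> : '1_A = 1 - (1 - '1_A) :> 'CF(G) by rewrite opprB addrC subrK.
  have h1 : '['chi_i, 1] \in Crat by rewrite -irr0 cfdot_irr rpred_nat.
  rewrite cfdotBr rpredB //.
  rewrite cfdotE rpredM ?rpredV ?rpred_nat // rpred_sum // => x Gx.
  rewrite !cfunE val1A cfun1E Gx /=.
  have [h|h] := boolP (irrational_class G (x ^: G)).
    by rewrite subrr conjC0 mulr0 Crat0.
  rewrite subr0 conjC1 mulr1; exact: rat_class_val.
- exact: cfuni_on.
- have [K] : exists K, K \in T.
    by apply/set0Pn; rewrite -cards_eq0; exact: nz.
  rewrite inE => /andP[/imsetP[x Gx ->] iK].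
  apply/eqP => /cfunP/(_ x); rewrite val1A Gx iK cfunE /=.
  by move/eqP; rewrite oner_eq0.
Qed.

Lemma vdot (gT : finGroupType) (G : {group gT}) K (phi : 'CF(G)) :
  K \in classes G ->
  '[(#|K|%:R)^-1 *: '1_K, phi] = #|G|%:R^-1 * (phi (repr K))^*.
Proof.
case/imsetP=> x Gx ->.
rewrite cfdotZl (cfdotEl _ (cfuni_on G (x ^: G))).
have -> : \sum_(y in x ^: G) ('1_(x ^: G) : 'CF(G)) y * (phi y)^* =
          \sum_(y in x ^: G) (phi (repr (x ^: G)))^*.
  apply: eq_bigr => y xy; rewrite cfun_classE Gx xy mul1r.
  by rewrite -(class_eqP xy) cfun_repr.
rewrite sumr_const mulrCA -[(phi _)^* *+ _]mulr_natl mulKf //.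
by rewrite pnatr_eq0 -lt0n; apply/card_gt0P; exists x; apply: class_refl.
Qed.

Lemma part_b (gT : finGroupType) (G : {group gT}) :
  n_irr_chars G != 0%N -> (n_irr_classes G + 2 <= 2 * n_irr_chars G)%N.
Proof.
move=> nz.
pose S := [set i : Iirr G | irrational_char i].
pose T := [set K in classes G | irrational_class G K].
pose R := fun K L : {set gT} =>
  `[< exists u : {rmorphism algC -> algC}, forall i, 'chi[G]_i (repr L) = u ('chi_i (repr K)) >].
pose Y := <<[seq 'chi[G]_i | i in S]>>%VS.
pose w := \sum_(i in S) 'chi[G]_i.
have dimY : (\dim Y <= n_irr_chars G)%N.
  by apply: leq_trans (dim_span _) _; rewrite size_map -cardE.
have reprG K : K \in classes G -> repr K \in G.
  by case/imsetP=> x Gx ->; have [y Gy ->] := repr_class G x; apply: groupJ.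
have reprK K : K \in classes G -> (repr K) ^: G = K.
  by case/imsetP=> x Gx ->; have [y Gy ->] := repr_class G x; rewrite classGidl.
have TC K : K \in T -> K \in classes G by rewrite inE => /andP[].
apply: leq_trans (leq_mul (leqnn 2) dimY).
apply: (@key_lemma _ G _ T (fun K => (#|K|%:R)^-1 *: '1_K) R Y w).
- move=> K L TK TL nKL; rewrite vdot ?TC //.
  have /imsetP[y Gy DL] := TC L TL.
  rewrite !cfunE DL cfun_classE Gy.
  have -> : (repr K \in y ^: G) = false.
    apply/negbTE; apply: contra nKL => /class_eqP e.
    by rewrite DL -e reprK ?TC.
  by rewrite /= mulr0 conjC0 mulr0.
- move=> K TK; have /imsetP[x Gx DK] := TC K TK.
  apply/eqP => /cfunP/(_ (repr K)); rewrite !cfunE DK cfun_classE Gx.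
  rewrite (mem_repr x (class_refl G x)) mulr1 => /eqP.
  rewrite invr_eq0 pnatr_eq0; apply/negP; rewrite -lt0n.
  by apply/card_gt0P; exists x; apply: class_refl.
- move=> K L _ _ /asboolP[u Du]; apply/asboolP; exists (algC_invaut u) => i.
  by rewrite Du; apply/esym; apply: (algC_autK u).
- move=> K L M _ _ _ /asboolP[u Du] /asboolP[v Dv]; apply/asboolP.
  by exists (v \o u)%FUN => i; rewrite Dv Du.
- move=> K TK; move: (TK); rewrite inE => /andP[CK /existsP[i nQ]].
  have [u nu] : exists u : {rmorphism algC -> algC}, u ('chi_i (repr K)) != 'chi_i (repr K).
    apply/not_existsP => h; apply: (negP nQ); apply: irr_val_rat => u.
    by apply/eqP/negPn/negP; apply: h.
  have [y Gy Dy] := aut_class u (reprG K CK).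
  exists (y ^: G).
    rewrite inE mem_classes //=; apply/existsP; exists i.
    by rewrite cfun_repr Dy Crat_aut.
  apply/andP; split.
    apply/eqP => e; move/eqP: nu; apply.
    by rewrite -Dy -cfun_repr e.
  by apply/asboolP; exists u => j; rewrite cfun_repr Dy.
- move=> K L TK TL /asboolP[u Du].
  rewrite [X in X \in _]cfun_sum_cfdot (bigID (fun i => i \in S)) /=.
  rewrite [X in _ + X]big1 ?addr0 => [|i nS].
    apply: memv_suml => i Si; apply: memvZ; apply: memv_span; apply: map_f.
    by rewrite mem_enum.
  rewrite cfdotBl !vdot ?TC // Du aut_Crat ?subrr ?scale0r //.
  apply: rat_char_val; by rewrite /S inE in nS.
- move=> K L TK TL /asboolP[u Du].
  rewrite cfdotBl !vdot ?TC // /w !sum_cfunE.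
  have -> : \sum_(i in S) 'chi_i (repr L) = \sum_(i in S) 'chi_i (repr K).
    transitivity (\sum_(i in S) 'chi_(aut_Iirr u i) (repr K)).
      by apply: eq_bigr => i _; rewrite Du aut_IirrE cfunE.
    rewrite [RHS](reindex_inj (aut_Iirr_inj u)) /=; apply: eq_bigl => i.
    by rewrite !inE irr_char_aut.
  by rewrite subrr.
- rewrite /w; apply: memv_suml => i Si; apply: memv_span; apply: map_f.
  by rewrite mem_enum.
- have [i Si] : exists i, i \in S by apply/set0Pn; rewrite -cards_eq0.
  apply/eqP => w0.
  have : '[w, 'chi_i] = 1.
    rewrite cfdot_suml (bigD1 i) //= cfdot_irr eqxx big1 ?addr0 // => j /andP[_ nji].
    by rewrite cfdot_irr (negPf nji).
  by rewrite w0 cfdot0l => /eqP; rewrite eq_sym oner_eq0.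
Qed.

Lemma zero_a (gT : finGroupType) (G : {group gT}) :
  n_irr_classes G = 0%N -> n_irr_chars G = 0%N.
Proof.
rewrite /n_irr_classes /n_irr_chars => /eqP; rewrite cards_eq0 => /eqP T0.
apply/eqP; rewrite cards_eq0; apply/eqP/setP => i; rewrite !inE.
apply/negbTE/exists_inP => -[x Gx nQ].
have : x ^: G \in [set K in classes G | irrational_class G K].
  rewrite inE mem_classes //=; apply/existsP; exists i; by rewrite cfun_repr.
by rewrite T0 inE.
Qed.

Lemma zero_b (gT : finGroupType) (G : {group gT}) :
  n_irr_chars G = 0%N -> n_irr_classes G = 0%N.
Proof.
rewrite /n_irr_classes /n_irr_chars => /eqP; rewrite cards_eq0 => /eqP S0.
apply/eqP; rewrite cards_eq0; apply/eqP/setP => K; rewrite !inE.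
apply/negbTE/andP => -[/imsetP[x Gx ->] /existsP[i nQ]].
have : i \in [set i : Iirr G | irrational_char i].
  rewrite inE; apply/exists_inP; exists (repr (x ^: G)) => //.
  by have [y Gy ->] := repr_class G x; apply: groupJ.
by rewrite S0 inE.
Qed.


End Helpers.

Theorem mainTheorem5 (gT : finGroupType) (G : {group gT}) (n : nat) :
  (n_irr_classes G = n -> (2 * n_irr_chars G <= n ^ 2)%N) /\
  (n_irr_chars G = n -> (2 * n_irr_classes G <= n ^ 2)%N).
Proof.
split => <-.
- have [e|nz] := eqVneq (n_irr_classes G) 0%N.
    by rewrite (zero_a e) e.
  exact: arith (part_a nz).
- have [e|nz] := eqVneq (n_irr_chars G) 0%N.
    by rewrite (zero_b e) e.
  exact: arith (part_b nz).
Qed.
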